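(* Let $k\ge 2$ be an integer. Every $k$-automatic sequence is strongly $k$-recursive.
   Context: A sequence $(f(n))_{n\ge0}$ is $k$-automatic if there is a deterministic finite automaton with output which, on input the base-$k$ representation of $n$, reaches a state whose output is $f(n)$. A sequence $(f(n))_{n\ge 0}$ is strongly $k$-recursive if there exist natural numbers $r<t$ such that for every $b$ with $0\le b<k^t$, the sequence $(f(k^t n+b))_{n\ge 0}$ is a (finite) linear combination, with constant coefficients, of the sequences $(f(k^r n+a))_{n\ge0}$ with $0\le a<k^r$. *)

(* Defs.v *)
From mathcomp Require Import all_boot all_order all_algebra.
Set Implicit Arguments. Unset Strict Implicit. Unset Printing Implicit Defensive.
Import GRing.Theory.
Local Open Scope ring_scope.

(* Base-k digits of n, least significant first (n = 0 gives the empty word).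
   The fuel n suffices since n %/ k < n for k >= 2 and n > 0. *)
Fixpoint base_rev_digits (k fuel n : nat) : seq nat :=
  match fuel with
  | 0 => [::]
  | fuel'.+1 => if n == 0%N then [::] else (n %% k)%N :: base_rev_digits k fuel' (n %/ k)
  end.

Definition base_digits (k n : nat) : seq nat := rev (base_rev_digits k n n).

(* f is k-automatic: a DFAO (finite state set Q, initial state q0,
   transition delta, output tau) reading the base-k representation of n
   ends in a state with output f n. *)
Definition automatic (T : Type) (k : nat) (f : nat -> T) : Prop :=
  exists (Q : finType) (q0 : Q) (delta : Q -> nat -> Q) (tau : Q -> T),
    forall n : nat, f n = tau (foldl delta q0 (base_digits k n)).

Definition strongly_recursive (R : nzRingType) (k : nat) (f : nat -> R) : Prop :=
  exists r t : nat, (r < t)%N /\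
    forall b : nat, (b < k ^ t)%N ->
      exists c : nat -> R, forall n : nat,
        f (k ^ t * n + b)%N = \sum_(a < k ^ r) c a * f (k ^ r * n + a)%N.

(* Main.v *)
Require Import Defs.
From mathcomp Require Import all_boot all_order all_algebra.
From mathcomp Require Import zify.
Import GRing.Theory.

Section Aux.
Variable k : nat.
Hypothesis hk : (2 <= k)%N.

Definition dval (w : seq nat) : nat := foldl (fun acc d => acc * k + d)%N 0%N w.

Lemma dval_rcons w d : dval (rcons w d) = (dval w * k + d)%N.
Proof. by rewrite /dval foldl_rcons. Qed.

Lemma dval_cat u v : dval (u ++ v) = (dval u * k ^ size v + dval v)%N.
Proof.
elim/last_ind: v => [|v d IH]; first by rewrite cats0 /= expn0 muln1 addn0.
rewrite -rcons_cat !dval_rcons IH size_rcons expnSr; lia.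
Qed.

Fixpoint pad (e b : nat) : seq nat :=
  match e with 0 => [::] | e'.+1 => rcons (pad e' (b %/ k)) (b %% k) end.

Lemma size_pad e b : size (pad e b) = e.
Proof. by elim: e b => [|e IH] b //=; rewrite size_rcons IH. Qed.

Lemma all_pad e b : all (fun d => d < k)%N (pad e b).
Proof.
elim: e b => [|e IH] b //=; rewrite all_rcons IH andbT ltn_mod; lia.
Qed.

Lemma dval_pad e b : (b < k ^ e)%N -> dval (pad e b) = b.
Proof.
elim: e b => [|e IH] b /=; first by rewrite expn0; case: b.
move=> hb; rewrite dval_rcons IH; first by rewrite -divn_eq.
by rewrite ltn_divLR -?expnSr //; lia.
Qed.

Lemma brd_fuel f1 f2 n : (n <= f1)%N -> (n <= f2)%N ->
  base_rev_digits k f1 n = base_rev_digits k f2 n.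
Proof.
elim: f1 f2 n => [|f1 IH] [|f2] n /=.
- by [].
- by rewrite leqn0 => /eqP ->.
- by move=> _; rewrite leqn0 => /eqP ->.
- move=> h1 h2; case: eqP => // /eqP hn; congr (_ :: _); apply: IH.
  + have : (n %/ k < n)%N by apply: ltn_Pdiv; lia. lia.
  + have : (n %/ k < n)%N by apply: ltn_Pdiv; lia. lia.
Qed.

Lemma base_digitsS n : (0 < n)%N ->
  base_digits k n = rcons (base_digits k (n %/ k)) (n %% k).
Proof.
move=> hn; rewrite /base_digits; case: n hn => [//|m] _ /=.
rewrite rev_cons; congr rcons; congr rev; apply: brd_fuel => //.
have : (m.+1 %/ k < m.+1)%N by apply: ltn_Pdiv; lia. lia.
Qed.

Variables (Q : finType) (q0 : Q) (delta : Q -> nat -> Q).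

Definition dlt (s : Q * bool) (d : nat) : Q * bool :=
  if s.2 && (d == 0%N) then (q0, true) else (delta s.1 d, false).

Definition stateOf (n : nat) : Q * bool :=
  (foldl delta q0 (base_digits k n), n == 0%N).

Lemma S_inv w : all (fun d => d < k)%N w ->
  foldl dlt (q0, true) w = stateOf (dval w).
Proof.
elim/last_ind: w => [|w d IH] //.
rewrite all_rcons => /andP [hd hw]; rewrite foldl_rcons IH // dval_rcons.
set m := dval w.
rewrite /dlt /stateOf /=.
case: (eqVneq m 0%N) => hm; case: (eqVneq d 0%N) => hd0 /=.
- by rewrite hm hd0.
- rewrite hm mul0n add0n (base_digitsS d); last lia.
  rewrite divn_small // modn_small // foldl_rcons (negbTE hd0) //.
- rewrite (base_digitsS (m * k + d)); last lia.
  rewrite divnMDl ?modnMDl ?divn_small ?modn_small ?addn0 ?foldl_rcons //; last lia.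
  congr pair; lia.
- rewrite (base_digitsS (m * k + d)); last lia.
  rewrite divnMDl ?modnMDl ?divn_small ?modn_small ?addn0 ?foldl_rcons //; last lia.
  congr pair; lia.
Qed.

Lemma shift_state e n b : (b < k ^ e)%N ->
  stateOf (k ^ e * n + b) = foldl dlt (stateOf n) (pad e b).
Proof.
move=> hb.
have hn : (n < k ^ n)%N by apply: ltn_expl; lia.
have := S_inv (pad n n ++ pad e b).
rewrite all_cat !all_pad dval_cat foldl_cat size_pad !dval_pad // S_inv ?all_pad //.
rewrite dval_pad // mulnC => <- //.
Qed.

End Aux.

Theorem theorem2 (R : nzRingType) (k : nat) (hk : (2 <= k)%N) (f : nat -> R) :
  automatic k f -> strongly_recursive k f.
Proof.
move=> [Q [q0 [delta [tau Hf]]]].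
pose phi (e b : nat) : {ffun Q * bool -> Q * bool} :=
  [ffun s => foldl (dlt Q q0 delta) s (pad k e b)].
pose S (e : nat) : {set {ffun Q * bool -> Q * bool}} :=
  [set phi e (nat_of_ord b) | b : 'I_(k ^ e)].
pose N := #|{: {set {ffun Q * bool -> Q * bool}}}|.
pose g (i : 'I_N.+1) := S (nat_of_ord i).
have : ~~ injectiveb g.
  apply/negP => /injectiveP hinj.
  by have := leq_card _ hinj; rewrite card_ord ltnn.
move=> /injectivePn [i [j hij hg]].
have key : forall r t, (r < t)%N -> S r = S t -> strongly_recursive k f.
  move=> r t hrt hS; exists r, t; split => // b hb.
  have : phi t b \in S t by apply/imsetP; exists (Ordinal hb).
  rewrite -hS => /imsetP [a _ ha].
  exists (fun i => ((i == nat_of_ord a)%:R)%R) => n.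
  rewrite (bigD1 a) //= eqxx mul1r big1 ?addr0; last first.
    by move=> i0; rewrite -val_eqE /= => /negbTE ->; rewrite mul0r.
  rewrite !Hf.
  have -> : foldl delta q0 (base_digits k (k ^ t * n + b)) =
            (stateOf k Q q0 delta (k ^ t * n + b)).1 by [].
  have -> : foldl delta q0 (base_digits k (k ^ r * n + a)) =
            (stateOf k Q q0 delta (k ^ r * n + a)).1 by [].
  rewrite !(@shift_state k hk Q q0 delta) //.
  have := congr1 (fun F : {ffun Q * bool -> Q * bool} => F (stateOf k Q q0 delta n)) ha.
  by rewrite /phi !ffunE => ->.
case: (ltngtP i j) => h.
- exact: (key _ _ h hg).
- exact: (key _ _ h (esym hg)).
- by move: hij; rewrite (val_inj h) eqxx.
Qed.
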